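(* Let $\gamma_1,\gamma_2>0$ and consider the birth-death chain RDS $(\theta,\varphi)$ on $\mathbb{N}_0$ described in the context, and let $W_0=\{0,2,4,\dots\}$, $W_1=\{1,3,5,\dots\}$. Let $K:\mathcal{Q}_+\to\mathcal{P}(\mathbb{N}_0)$, $q\mapsto K_q$, be a finite random set such that, for some $i\in\{0,1\}$, $K_q\subset W_i$ for $\mathbb{P}$-a.e. $q$. Then $\#\varphi^n_q(K_q)\to1$ in probability as $n\to\infty$ (where $\#$ denotes cardinality).
   Context: Noise space: $\mathcal{Q}_+=\{q=(q_n)_{n\in\mathbb{N}_0}: q_n\in[0,1]\}$ with the product Borel $\sigma$-algebra and the product measure $\mathbb{P}=\lambda^{\mathbb{N}_0}$, $\lambda$ Lebesgue measure on $[0,1]$; shift $\theta(q_0,q_1,\dots)=(q_1,q_2,\dots)$. For $q\in\mathcal{Q}_+$ define $f_q:\mathbb{N}_0\to\mathbb{N}_0$ by $f_q(x)=x+1$ if $q_0<\frac{\gamma_1}{\gamma_1+\gamma_2x}$ and $f_q(x)=x-1$ otherwise. The cocycle is $\varphi^0_q(x)=x$ and $\varphi^n_q(x)=f_{\theta^{n-1}q}\circ\cdots\circ f_q(x)$ for $n\geq1$. A map $K:\mathcal{Q}_+\to\mathcal{P}(\mathbb{N}_0)$ is a random set if $q\mapsto d(x,K_q)=\inf_{y\in K_q}|x-y|$ is measurable for every $x$; it is a finite random set if moreover $K_q$ is nonempty and finite for every $q$. *)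

(* Defs.v *)
From HB Require Import structures.
From mathcomp Require Import all_boot all_order all_algebra.
From mathcomp Require Import all_classical all_reals all_analysis measurable_realfun.
From mathcomp Require Import finmap.
Set Implicit Arguments. Unset Strict Implicit. Unset Printing Implicit Defensive.
Import Order.TTheory GRing.Theory Num.Theory.
Import numFieldNormedType.Exports.
Local Open Scope classical_set_scope.
Local Open Scope ring_scope.

Section noise.
Variable R : realType.

Definition coord_sets : set (set (nat -> R)) :=
  [set (fun q : nat -> R => q n) @^-1` B | n in [set: nat] & B in measurable].

Definition Qspace := g_sigma_algebraType coord_sets.

(* P is the product measure lambda^N of Lebesgue measure on [0,1]:
   it is characterised (uniquely, by the pi-lambda theorem) by its values on
   finite-dimensional measurable rectangles *)
Definition is_noise_law (P : probability Qspace R) : Prop :=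
  forall (n : nat) (B : 'I_n -> set R), (forall i, measurable (B i)) ->
    P [set q : Qspace | forall i : 'I_n, B i (q i)] =
    (\prod_(i < n) (@lebesgue_measure R) (B i `&` `[0%R, 1%R]))%E.

Definition shift (q : nat -> R) : nat -> R := fun n => q n.+1.

Definition fstep (g1 g2 : R) (q : nat -> R) (x : nat) : nat :=
  if q 0%N < g1 / (g1 + g2 * x%:R) then x.+1 else x.-1.

Fixpoint phi (g1 g2 : R) (n : nat) (q : nat -> R) (x : nat) : nat :=
  match n with
  | 0%N => x
  | m.+1 => fstep g1 g2 (iter m shift q) (phi g1 g2 m q x)
  end.

(* d(x, K) = inf_{y in K} |x - y| (in the extended reals; +oo if K empty) *)
Definition distE (x : nat) (K : set nat) : \bar R :=
  ereal_inf [set ((`|x%:R - y%:R|)%:E : \bar R) | y in K].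

Definition random_set (K : Qspace -> set nat) : Prop :=
  forall x : nat, measurable_fun [set: Qspace] (fun q => distE x (K q)).

Definition finite_random_set (K : Qspace -> set nat) : Prop :=
  random_set K /\ forall q, K q !=set0 /\ finite_set (K q).

(* W_0 = even numbers (b = false), W_1 = odd numbers (b = true) *)
Definition W (b : bool) : set nat := [set x | odd x = b].

Definition ncard (A : set nat) : nat := #|` fset_set A|.

End noise.

(* Main.v *)
Require Import Defs.
From HB Require Import structures.
From mathcomp Require Import all_boot all_order all_algebra.
From mathcomp Require Import all_classical all_reals all_analysis measurable_realfun.
From mathcomp Require Import finmap.
From mathcomp Require Import ring lra.
Import Order.TTheory GRing.Theory Num.Theory.
Import numFieldNormedType.Exports.
Local Open Scope classical_set_scope.
Local Open Scope ring_scope.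
Section part1.
Variable R : realType.
Local Notation Q := (Qspace R).

Lemma mcoord (n : nat) (B : set R) : measurable B ->
  measurable [set q : Q | B (q n)].
Proof. by move=> mB; apply: sub_sigma_algebra; exists n => //; exists B. Qed.

Lemma mlt0 n (t : R) : measurable [set q : Q | q n < t].
Proof.
have := @mcoord n _ (measurable_itv `]-oo, t[).
by congr measurable; apply/seteqP; split => q /=; rewrite in_itv.
Qed.

Lemma measurable_shift : measurable_fun [set: Q] (@Defs.shift R : Q -> Q).
Proof.
apply: (@measurability _ _ Q Q setT (@Defs.shift R) (@coord_sets R)) => //.
move=> _ [_ [n _ [B mB <-]] <-].
by rewrite setTI; apply: sub_sigma_algebra; exists n.+1 => //; exists B.
Qed.

Lemma mshift (C : set Q) : measurable C -> measurable ((@Defs.shift R : Q -> Q) @^-1` C).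
Proof. by move=> mC; rewrite -[X in measurable X]setTI; exact: measurable_shift. Qed.

Lemma meas_ite (c : Q -> bool) (A B : set Q) : measurable [set q | c q] ->
  measurable A -> measurable B -> measurable [set q | if c q then A q else B q].
Proof.
move=> mc mA mB.
have -> : [set q | if c q then A q else B q] =
   ([set q | c q] `&` A) `|` (~` [set q | c q] `&` B).
  by apply/seteqP; split => q /=; case: (c q) => /=; [move=> ?; left|move=> ?; right|
    case=> -[]|case=> -[]].
by apply: measurableU; apply: measurableI => //; exact: measurableC.
Qed.

Variables g1 g2 : R.

Lemma phiS n (q : Q) x : phi g1 g2 n.+1 q x = phi g1 g2 n (Defs.shift q) (fstep g1 g2 q x).
Proof.
elim: n x => [//|n IH] x.
rewrite -[LHS]/(fstep g1 g2 (iter n.+1 (@Defs.shift R) q) (phi g1 g2 n.+1 q x)) IH.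
by rewrite -[RHS]/(fstep g1 g2 (iter n (@Defs.shift R) (Defs.shift q)) (phi g1 g2 n (Defs.shift q) (fstep g1 g2 q x))) iterSr.
Qed.

Arguments phi : simpl never.

Lemma mphi n x z : measurable [set q : Q | phi g1 g2 n q x = z].
Proof.
elim: n x z => [|n IH] x z.
  case: (eqVneq x z) => [->|nxz].
    by rewrite (_ : [set _ | _] = setT) //; apply/seteqP; split.
  by rewrite (_ : [set _ | _] = set0) //; apply/seteqP; split => q //=; move/eqP; rewrite (negbTE nxz).
have -> : [set q : Q | phi g1 g2 n.+1 q x = z] = [set q | if q 0%N < g1 / (g1 + g2 * x%:R)
   then ((@Defs.shift R : Q -> Q) @^-1` [set q : Q | phi g1 g2 n q x.+1 = z]) q
   else ((@Defs.shift R : Q -> Q) @^-1` [set q : Q | phi g1 g2 n q x.-1 = z]) q].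
  by apply/seteqP; split => q /=; rewrite phiS /fstep; case: ifP.
by apply: meas_ite; [exact: mlt0| exact: mshift | exact: mshift].
Qed.

End part1.
Section part2.
Variable R : realType.
Local Notation Q := (Qspace R).
Local Notation sh := (@Defs.shift R : Q -> Q).
Local Notation leb := (@lebesgue_measure R).
Variable P : probability Q R.
Hypothesis hP : is_noise_law P.

Definition rect n (B : nat -> set R) : set Q :=
  [set q : Q | forall i, (i < n)%N -> B i (q i)].
Definition Grect : set (set Q) :=
  [set S | exists n (B : nat -> set R), (forall i, measurable (B i)) /\ S = rect n B].

Lemma P_rect n B : (forall i, measurable (B i)) ->
  P (rect n B) = (\prod_(i < n) leb (B i `&` `[0%R, 1%R]))%E.
Proof.
move=> mB; have -> : rect n B = [set q : Q | forall i : 'I_n, B i (q i)].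
  by apply/seteqP; split => q /= H => [i|i hi]; [exact: H|exact: (H (Ordinal hi))].
exact: hP.
Qed.

Lemma mrect n B : (forall i, measurable (B i)) -> measurable (rect n B).
Proof.
move=> mB.
have -> : rect n B = \bigcap_i [set q : Q | (i < n)%N -> B i (q i)].
  by apply/seteqP; split => q /= H => [i _|i]; [exact: H| exact: (H i Logic.I)].
apply: bigcapT_measurable => i /=.
case: (ltnP i n) => hi.
  have -> : [set q : Q | true -> B i (q i)] = [set q : Q | B i (q i)].
    by apply/seteqP; split => q /=; [apply| move=> ? ?].
  exact: mcoord.
have -> : [set q : Q | false -> B i (q i)] = setT.
  by apply/seteqP; split => q.
exact: measurableT.
Qed.

Lemma Grect_gen : @measurable _ Q = <<s Grect >>.
Proof.
apply/seteqP; split.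
- apply: smallest_sub; first exact: smallest_sigma_algebra.
  move=> _ [n _ [B mB <-]]; apply: sub_sigma_algebra.
  exists n.+1, (fun i => if i == n then B else setT); split.
    by move=> i; case: ifP.
  apply/seteqP; split => q /=.
    by move=> Bq i _; case: eqP => // ->.
  by move=> H; have := H n (ltnSn n); rewrite eqxx.
- apply: smallest_sub; first exact: sigma_algebra_measurable.
  by move=> _ [n [B [mB ->]]]; exact: mrect.
Qed.

Lemma Grect_setI : setI_closed Grect.
Proof.
move=> _ _ [n [B [mB ->]]] [m [C [mC ->]]].
exists (maxn n m), (fun i => (if (i < n)%N then B i else setT) `&`
                            (if (i < m)%N then C i else setT)); split.
  by move=> i; apply: measurableI; case: ifP.
apply/seteqP; split => q /=.
  move=> [hB hC] i _; split; case: ifP => // h; [exact: hB|exact: hC].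
move=> H; split => i hi.
  by have := H i (leq_trans hi (leq_maxl n m)); rewrite hi => -[].
by have := H i (leq_trans hi (leq_maxr n m)); rewrite hi => -[].
Qed.

Lemma leb01 : leb `[0%R, 1%R] = 1%E.
Proof. rewrite lebesgue_measure_itv /= lte_fin ltr01.
by rewrite oppr0 adde0. Qed.

Lemma markov (I : set R) (C : set Q) : measurable I -> measurable C ->
  P ([set q : Q | I (q 0%N)] `&` (sh @^-1` C)) = (leb (I `&` `[0%R, 1%R]) * P C)%E.
Proof.
move=> mI mC.
have mI0 : measurable [set q : Q | I (q 0%N)] by exact: mcoord.
set c := leb (I `&` `[0%R, 1%R]).
have c0 : (0 <= c)%E by exact: measure_ge0.
have c1 : (c <= 1)%E.
  rewrite -leb01; apply: le_measure; rewrite ?inE//.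
    by apply/mem_set; apply: measurableI => //; exact: measurable_itv.
  by apply/mem_set; exact: measurable_itv.
have cE : c = (fine c)%:E.
  by rewrite fineK // ge0_fin_numE // (le_lt_trans c1) // ltry.
have fc0 : 0 <= fine c := fine_ge0 c0.
pose m1 := measure_function_pushforward__canonical__measure_function_Measure
   (mrestr P mI0) (@measurable_shift R).
pose m2 := mscale (NngNum fc0) P.
have : m1 C = m2 C.
  apply: (measure_unique Grect (fun=> setT)) => //.
  - exact: Grect_gen.
  - exact: Grect_setI.
  - move=> _; exists 0%N, (fun=> setT); split => //.
    by apply/seteqP; split => q.
  - by rewrite bigcup_const.
  - move=> _ [n [B [mB ->]]].
    rewrite /m1 /m2 /= /pushforward /mrestr /mscale /= -cE.
    have -> : (sh @^-1` rect n B) `&` [set q : Q | I (q 0%N)] =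
        rect n.+1 (fun i => if i is k.+1 then B k else I).
      apply/seteqP; split => q /=.
        by move=> [H I0] [|i] hi //=; exact: H.
      move=> H; split; last exact: (H 0%N (ltn0Sn _)).
      by move=> i hi; exact: (H i.+1 hi).
    rewrite P_rect; last by case.
    rewrite big_ord_recl P_rect //=.
  - move=> k; rewrite /m1 /= /pushforward /mrestr.
    apply: (le_lt_trans (probability_le1 _ _)) => //.
    + apply: measurableI => //; exact: mshift.
    + exact: ltry.
rewrite /m1 /m2 /= /pushforward /mrestr /mscale /= -cE => <-.
by rewrite setIC.
Qed.

End part2.
Section part3.
Variable R : realType.
Local Notation Q := (Qspace R).
Local Notation sh := (@Defs.shift R : Q -> Q).
Local Notation leb := (@lebesgue_measure R).
Variables g1 g2 : R.
Hypotheses (g1p : 0 < g1) (g2p : 0 < g2).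

Definition thr (x : nat) : R := g1 / (g1 + g2 * x%:R).

Lemma thr_gt0 x : 0 < thr x.
Proof. by rewrite /thr divr_gt0 // ltr_wpDr // mulr_ge0 // ltW. Qed.

Lemma thr_le1 x : thr x <= 1.
Proof.
have hx : 0 < g1 + g2 * x%:R by rewrite ltr_wpDr // mulr_ge0 // ltW.
rewrite /thr ler_pdivrMr // mul1r lerDl mulr_ge0 // ltW //.
Qed.

Lemma thr0 : thr 0 = 1.
Proof. by rewrite /thr mulr0 addr0 divff // gt_eqF. Qed.

Lemma thr_lt x y : (x < y)%N -> thr y < thr x.
Proof.
move=> xy; rewrite /thr.
have hx : 0 < g1 + g2 * x%:R by rewrite ltr_wpDr // mulr_ge0 // ltW.
have hy : 0 < g1 + g2 * y%:R by rewrite ltr_wpDr // mulr_ge0 // ltW.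
rewrite ltr_pM2l // ltf_pV2 ?posrE // ltrD2l ltr_pM2l // ltr_nat //.
Qed.

Lemma thr_le x y : (x <= y)%N -> thr y <= thr x.
Proof.
rewrite leq_eqVlt => /orP[/eqP->//|xy]; exact/ltW/thr_lt.
Qed.

Lemma fstepE (q : Q) x : fstep g1 g2 q x = if q 0%N < thr x then x.+1 else x.-1.
Proof. by []. Qed.

Definition NV x y : set Q := [set q | forall n, phi g1 g2 n q x != phi g1 g2 n q y].

Lemma mNV x y : measurable (NV x y).
Proof.
have -> : NV x y = \bigcap_n \bigcup_z ([set q : Q | phi g1 g2 n q x = z] `&`
                                        ~` [set q : Q | phi g1 g2 n q y = z]).
  apply/seteqP; split => q /= H.
    move=> n _; exists (phi g1 g2 n q x) => //; split => //= e.
    by move: (H n); rewrite e eqxx.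
  move=> n; have [z _ [/= -> hy]] := H n Logic.I; apply/eqP => e; apply: hy; by rewrite -e.
apply: bigcapT_measurable => n; apply: bigcupT_measurable => z.
by apply: measurableI; [exact: mphi| apply: measurableC; exact: mphi].
Qed.

Lemma NV_step x y (q : Q) : NV x y q <->
  x != y /\ NV (fstep g1 g2 q x) (fstep g1 g2 q y) (Defs.shift q).
Proof.
split.
  move=> H; split; first exact: (H 0%N).
  by move=> n; have := H n.+1; rewrite !phiS.
by move=> [nxy H] [|n] //; rewrite !phiS; exact: H.
Qed.

Lemma NVxx x : NV x x = set0.
Proof. by apply/seteqP; split => q // /(_ 0%N); rewrite eqxx. Qed.

Lemma NV_split x y : (x < y)%N ->
  NV x y = ([set q : Q | [set r | r < thr y] (q 0%N)] `&` sh @^-1` NV x.+1 y.+1)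
   `|` ([set q : Q | [set r | thr y <= r < thr x] (q 0%N)] `&` sh @^-1` NV x.+1 y.-1)
   `|` ([set q : Q | [set r | thr x <= r] (q 0%N)] `&` sh @^-1` NV x.-1 y.-1).
Proof.
move=> xy; have lt := thr_lt _ _ xy.
have nxy : x != y by rewrite neq_ltn xy.
apply/seteqP; split => q /=.
  move=> /NV_step [_]; rewrite !fstepE.
  have [h1|h1] := ltP (q 0%N) (thr y).
    by rewrite (lt_trans h1 lt) => H; left; left.
  have [h2|h2] := ltP (q 0%N) (thr x).
    by move=> H; left; right.
  by move=> H; right.
move=> H; apply/NV_step; split => //; rewrite !fstepE.
case: H => [[[h1 H]|[/andP[h1 h2] H]]|[h2 H]].
- by rewrite h1 (lt_trans h1 lt).
- by rewrite h2 ltNge h1.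
- by rewrite ltNge h2 ltNge (le_trans (ltW lt) h2).
Qed.

End part3.
Arguments NV {R}. Arguments thr {R}.
Section part3b.
Variable R : realType.
Local Notation Q := (Qspace R).
Local Notation sh := (@Defs.shift R : Q -> Q).
Local Notation leb := (@lebesgue_measure R).
Variable P : probability Q R.
Hypothesis hP : is_noise_law P.
Variables g1 g2 : R.
Hypotheses (g1p : 0 < g1) (g2p : 0 < g2).

Lemma leb_lt a : 0 <= a -> a <= 1 -> leb ([set r | r < a] `&` `[0%R, 1%R]) = a%:E.
Proof.
move=> a0 a1.
have -> : [set r | r < a] `&` `[0%R, 1%R] = `[0%R, a[%classic.
  apply/seteqP; split => r /=; rewrite !in_itv /=.
    by case=> ra /andP[r0 r1]; rewrite r0 ra.
  by case/andP => r0 ra; split => //; rewrite r0 /= (le_trans (ltW ra) a1).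
rewrite lebesgue_measure_itv /= lte_fin oppr0 adde0.
by case: ifPn => // /negbTE; rewrite lt_neqAle a0 andbT => /negbFE/eqP <-.
Qed.

Lemma leb_mid a b : 0 <= a -> a <= b -> b <= 1 ->
  leb ([set r | a <= r < b] `&` `[0%R, 1%R]) = (b - a)%:E.
Proof.
move=> a0 ab b1.
have -> : [set r | a <= r < b] `&` `[0%R, 1%R] = `[a, b[%classic.
  apply/seteqP; split => r /=; rewrite !in_itv /=.
    by case=> /andP[ar rb] _; rewrite ar rb.
  case/andP => ar rb; split; first by rewrite ar rb.
  by rewrite (le_trans a0 ar) (le_trans (ltW rb) b1).
rewrite lebesgue_measure_itv /= lte_fin -EFinD.
by case: ifPn => // /negbTE; rewrite lt_neqAle ab andbT => /negbFE/eqP <-; rewrite subrr.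
Qed.

Lemma leb_ge b : 0 <= b -> b <= 1 ->
  leb ([set r | b <= r] `&` `[0%R, 1%R]) = (1 - b)%:E.
Proof.
move=> b0 b1.
have -> : [set r | b <= r] `&` `[0%R, 1%R] = `[b, 1%R]%classic.
  apply/seteqP; split => r /=; rewrite !in_itv /=.
    by case=> br /andP[r0 r1]; rewrite br r1.
  by case/andP => br r1; split => //; rewrite (le_trans b0 br) r1.
rewrite lebesgue_measure_itv /= lte_fin -EFinD.
by case: ifPn => // /negbTE; rewrite lt_neqAle b1 andbT => /negbFE/eqP <-; rewrite subrr.
Qed.

Definition hh x y : R := fine (P (NV g1 g2 x y)).

Lemma hhE x y : P (NV g1 g2 x y) = (hh x y)%:E.
Proof. by rewrite /hh fineK // fin_num_measure //; exact: mNV. Qed.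

Lemma hh_rec x y : (x < y)%N -> hh x y =
  thr g1 g2 y * hh x.+1 y.+1 + (thr g1 g2 x - thr g1 g2 y) * hh x.+1 y.-1
  + (1 - thr g1 g2 x) * hh x.-1 y.-1.
Proof.
move=> xy; apply: EFin_inj.
rewrite !EFinD (EFinM (thr g1 g2 y)) (EFinM (thr g1 g2 x - _)) (EFinM (1 - _)) -!hhE.
have ty0 := @thr_gt0 R g1 g2 g1p g2p y; have tx1 := @thr_le1 R g1 g2 g1p g2p x.
have ty1 := @thr_le1 R g1 g2 g1p g2p y; have tx0 := @thr_gt0 R g1 g2 g1p g2p x.
have lt := @thr_lt R g1 g2 g1p g2p _ _ xy.
have mlt a : measurable [set r : R | r < a].
  by rewrite (_ : [set r | r < a] = `]-oo, a[%classic); [exact: measurable_itv|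
    apply/seteqP; split => r /=; rewrite in_itv].
have mge a : measurable [set r : R | a <= r].
  by rewrite (_ : [set r | a <= r] = `[a, +oo[%classic); [exact: measurable_itv|
    apply/seteqP; split => r /=; rewrite in_itv /= andbT].
have mmid a b : measurable [set r : R | a <= r < b].
  rewrite (_ : [set r | a <= r < b] = [set r | a <= r] `&` [set r | r < b]).
    exact: measurableI.
  by apply/seteqP; split => r /= => [/andP[]|[-> ->]].
have -> : P (NV g1 g2 x y) =
  (P ([set q : Q | [set r | (r < thr g1 g2 y)%R] (q 0%N)] `&` sh @^-1` NV g1 g2 x.+1 y.+1)
   + P ([set q : Q | [set r | (thr g1 g2 y <= r < thr g1 g2 x)%R] (q 0%N)] `&` sh @^-1` NV g1 g2 x.+1 y.-1)
   + P ([set q : Q | [set r | (thr g1 g2 x <= r)%R] (q 0%N)] `&` sh @^-1` NV g1 g2 x.-1 y.-1))%E.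
rewrite (@NV_split R g1 g2 g1p g2p _ _ xy) measureU //; last 3 first.
- by apply: measurableU; apply: measurableI; try apply: mcoord; try apply: mshift;
     try apply: mNV.
- by apply: measurableI; [apply: mcoord| apply: mshift; apply: mNV].
- apply/seteqP; split => q // [[[h1 _]|[/andP[_ h2] _]] [h3 _]].
    by move: (lt_le_trans h1 (le_trans (ltW lt) h3)); rewrite ltxx.
  by move: (lt_le_trans h2 h3); rewrite ltxx.
rewrite measureU //; last 3 first.
- by apply: measurableI; [apply: mcoord| apply: mshift; apply: mNV].
- by apply: measurableI; [apply: mcoord| apply: mshift; apply: mNV].
- apply/seteqP; split => q // [[h1 _] [/andP[h2 _] _]].
  by move: (lt_le_trans h1 h2); rewrite ltxx.
rewrite !(@markov R P hP) //; try apply: mNV.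
by rewrite (leb_lt _ (ltW ty0) ty1) (leb_mid _ _ (ltW ty0) (ltW lt) tx1) (leb_ge _ (ltW tx0) tx1).
Qed.

Lemma hh_ge0 x y : 0 <= hh x y.
Proof. by rewrite /hh fine_ge0. Qed.

Lemma hh_le1 x y : hh x y <= 1.
Proof.
rewrite -lee_fin -hhE; apply: probability_le1 => //; exact: mNV.
Qed.

Lemma hhxx x : hh x x = 0.
Proof. by rewrite /hh NVxx measure0. Qed.

End part3b.
Section part5.
Set Implicit Arguments.
Unset Strict Implicit.
Variable R : realType.
Variables (t : nat -> R) (h : nat -> nat -> R).
Hypotheses (t0 : t 0%N = 1) (tpos : forall x, 0 < t x)
  (tlt : forall x y, (x < y)%N -> t y < t x)
  (h0 : forall x y, 0 <= h x y) (h1 : forall x y, h x y <= 1)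
  (hxx : forall x, h x x = 0)
  (hrec : forall x y, (x < y)%N -> h x y = t y * h x.+1 y.+1
      + (t x - t y) * h x.+1 y.-1 + (1 - t x) * h x.-1 y.-1).
Variable L : nat.
Hypothesis tL : forall y, (L < y)%N -> 6 * t y <= 1.

Definition valid (x y : nat) := (x <= y)%N && (odd x == odd y).

Lemma tle1 x : t x <= 1.
Proof. by case: x => [|x]; [rewrite t0|rewrite -t0 ltW // tlt]. Qed.

Lemma tle x y : (x <= y)%N -> t y <= t x.
Proof. by rewrite leq_eqVlt => /orP[/eqP->//|xy]; exact/ltW/tlt. Qed.

Let p := 1 - t 1.

Lemma p_gt0 : 0 < p.
Proof. by rewrite /p subr_gt0 -t0 tlt. Qed.

Lemma p_le1 : p <= 1.
Proof. by rewrite /p lerBlDr lerDl ltW. Qed.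

Lemma p_le x : (0 < x)%N -> p <= 1 - t x.
Proof. by move=> x0; rewrite /p lerB // tle. Qed.

Lemma parity_gap x y : (x < y)%N -> odd x = odd y -> (x.+2 <= y)%N.
Proof.
case: y => // y; rewrite ltnS leq_eqVlt => /orP[/eqP<-|//].
by rewrite /=; case: (odd x).
Qed.

Lemma valid_next1 x y : valid x y -> valid x.+1 y.+1.
Proof. by rewrite /valid ltnS /=; case: (odd x); case: (odd y). Qed.

Lemma valid_next2 x y : valid x y -> (x < y)%N -> valid x.+1 y.-1.
Proof.
move=> /andP[_ /eqP oxy] xy; have g := parity_gap xy oxy.
case: y xy oxy g => // y xy oxy g; rewrite /valid /= -ltnS g /=.
by move: oxy => /=; case: (odd x); case: (odd y).
Qed.

Lemma valid_next3 x y : valid x y -> (0 < x)%N -> valid x.-1 y.-1.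
Proof.
case: x => // x; case: y => // y; rewrite /valid ltnS /= => /andP[-> /eqP]. 
by case: (odd x); case: (odd y).
Qed.

Lemma bound1 M : 0 <= M -> (forall x y, valid x y -> h x y <= M) ->
  forall y x, valid x y -> h x y <= M * (1 - p ^+ y).
Proof.
move=> M0 hM; elim=> [|y IH] x vxy.
  have -> : x = 0%N by move: vxy => /andP[]; rewrite leqn0 => /eqP.
  by rewrite hxx expr0 subrr mulr0.
have pk := exprn_ge0 y (ltW p_gt0).
have pk1 : p ^+ y <= 1 := exprn_ile1 y (ltW p_gt0) p_le1.
have pp := p_gt0; have pp1 := p_le1.
case: (eqVneq x y.+1) => [->|nx].
  by rewrite hxx mulr_ge0 // subr_ge0 exprn_ile1 // ltW.
have xy : (x < y.+1)%N by rewrite ltn_neqAle nx; case/andP: vxy.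
rewrite hrec //= exprS.
have hA := hM _ _ (valid_next1 vxy).
have hB := hM _ _ (valid_next2 vxy xy).
have ty := tpos y.+1; have txy := tlt xy.
have Mp : 0 <= M * p ^+ y by rewrite mulr_ge0.
case: x vxy nx xy txy hA hB => [|x] vxy nx xy txy hA hB.
- rewrite t0 subrr mul0r addr0.
  have IHB := IH _ (valid_next2 vxy xy).
  have pt := p_le (ltn0Sn y).
  have hB0 := h0 1 y; have hA0 := h0 1 y.+2.
  nra.
- have IHC := IH _ (valid_next3 vxy (ltn0Sn x)).
  have px := p_le (ltn0Sn x).
  have tx1 := tle1 x.+1.
  have hC0 := h0 x y; have hB0 := h0 x.+2 y; have hA0 := h0 x.+2 y.+2.
  move: IHC; rewrite /= => IHC.
  nra.
Qed.


Let th := 1 - p ^+ L.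

Lemma th_ge0 : 0 <= th.
Proof. by rewrite /th subr_ge0 exprn_ile1 // ?p_le1 // ltW // p_gt0. Qed.

Lemma th_lt1 : th < 1.
Proof. by rewrite /th ltrBlDr ltrDl exprn_gt0 // p_gt0. Qed.

Lemma bound_low M : 0 <= M -> (forall x y, valid x y -> h x y <= M) ->
  forall x y, valid x y -> (y <= L)%N -> h x y <= th * M.
Proof.
move=> M0 hM x y v yL.
apply: (le_trans (bound1 M0 hM v)); rewrite mulrC ler_wpM2r // lerB //.
exact: ler_wiXn2l (ltW p_gt0) p_le1 _ _ yL.
Qed.

Lemma key M eps : 0 <= M -> (forall x y, valid x y -> h x y <= M) -> 0 < eps ->
  forall x y, valid x y -> h x y <= th * M + eps * 2 ^+ y.
Proof.
move=> M0 hM e0 x0 y0 v0.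
rewrite leNgt; apply/negP => H0.
pose D x y := h x y - th * M - eps * 2 ^+ y.
have D0 : 0 < D x0 y0 by rewrite /D; lra.
have thM : 0 <= th * M by rewrite mulr_ge0 // th_ge0.
have step : forall x y, valid x y -> 0 < D x y ->
    exists x' y', valid x' y' /\ D x y + eps / 2 <= D x' y'.
  move=> x y v Dp.
  have e2 : 0 < eps * 2 ^+ y by rewrite mulr_gt0 // exprn_gt0.
  have yL : (L < y)%N.
    rewrite ltnNge; apply/negP => yL; have := bound_low M0 hM v yL.
    by rewrite /D in Dp; lra.
  have xy : (x < y)%N.
    rewrite ltn_neqAle; case/andP: (v) => -> _; rewrite andbT; apply/eqP => exy.
    by rewrite /D exy hxx in Dp; lra.
  have ty := tL yL; have tyP := tpos y; have txy := tlt xy; have tx1 := tle1 x.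
  case: y xy v Dp yL ty tyP txy e2 => [//|y] xy v Dp yL ty tyP txy e2.
  have u1 : 1 <= 2 ^+ y :> R by rewrite exprn_ege1 // ler1n.
  have hr := hrec xy; rewrite /= in hr.
  have id : t y.+1 * D x.+1 y.+2 + (t x - t y.+1) * D x.+1 y + (1 - t x) * D x.-1 y
      - D x y.+1 = eps * 2 ^+ y * (1 - 3 * t y.+1).
    by rewrite /D hr !exprS; ring.
  have gain : eps / 2 <= eps * 2 ^+ y * (1 - 3 * t y.+1).
    have w : 1 / 2 <= 1 - 3 * t y.+1 by lra.
    have ev : eps <= eps * 2 ^+ y by rewrite ler_peMr // ltW.
    set vv := eps * 2 ^+ y in ev *.
    have : vv * (1 / 2) <= vv * (1 - 3 * t y.+1) by rewrite ler_wpM2l // ltW // (lt_le_trans e0).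
    lra.
  have [hA|hA] := lerP (D x y.+1 + eps / 2) (D x.+1 y.+2).
    by exists x.+1, y.+2; split => //; exact: valid_next1.
  have [hB|hB] := lerP (D x y.+1 + eps / 2) (D x.+1 y).
    by exists x.+1, y; split => //; exact: (valid_next2 v xy).
  case: x xy v Dp txy tx1 hr id hA hB => [|x] xy v Dp txy tx1 hr id hA hB.
    rewrite t0 subrr mul0r addr0 in id; nra.
  have [hC|hC] := lerP (D x.+1 y.+1 + eps / 2) (D x y).
    by exists x, y; split => //; exact: (valid_next3 v (ltn0Sn x)).
  have := tpos x.+1; nra.
have iter : forall k : nat, exists x y, valid x y /\ D x0 y0 + k%:R * (eps / 2) <= D x y.
  elim => [|k [x [y [v hk]]]]; first by exists x0, y0; rewrite mul0r addr0.
  have kp : 0 <= k%:R * (eps / 2) :> R by rewrite mulr_ge0 // divr_ge0 // ltW.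
  have Dp : 0 < D x y by lra.
  have [x' [y' [v' h']]] := step x y v Dp.
  by exists x', y'; split => //; rewrite -natr1 mulrDl mul1r; lra.
have a0 : 0 <= 2 / eps by rewrite divr_ge0 // ltW.
have ha := archi_boundP a0.
set k := Num.Def.archi_bound (2 / eps) in ha.
have [x [y [v hk]]] := iter k.
have ae : 2 / eps * eps = 2 by rewrite divfK // gt_eqF.
have kbig : 1 < k%:R * (eps / 2) by nra.
have : D x y <= 1.
  rewrite /D; have := h1 x y; have : 0 <= eps * 2 ^+ y by rewrite mulr_ge0 ?exprn_ge0 // ltW.
  lra.
lra.
Qed.

Lemma bound3 M : 0 <= M -> (forall x y, valid x y -> h x y <= M) ->
  forall x y, valid x y -> h x y <= th * M.
Proof.
move=> M0 hM x y v; rewrite leNgt; apply/negP => H.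
have u0 : 0 < 2 ^+ y :> R by rewrite exprn_gt0.
pose eps := (h x y - th * M) / (2 * 2 ^+ y).
have e0 : 0 < eps by rewrite divr_gt0 // ?subr_gt0 // mulr_gt0.
have := key M0 hM e0 v.
have -> : eps * 2 ^+ y = (h x y - th * M) / 2.
  by rewrite /eps; field; rewrite gt_eqF.
lra.
Qed.

Lemma h_zero x y : valid x y -> h x y = 0.
Proof.
move=> v.
have hj : forall j, forall x y, valid x y -> h x y <= th ^+ j.
  elim => [|j IH] x' y' v'; first by rewrite expr0.
  rewrite exprS; apply: bound3 => //; exact: exprn_ge0 th_ge0.
apply/eqP; rewrite eq_le h0 andbT leNgt; apply/negP => hp.
have th1 : `|th| < 1 by rewrite ger0_norm ?th_ge0 // th_lt1.
have [N _ HN] := @cvgr0_norm_lt _ _ _ _ _ _ (cvg_expr th1) _ hp.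
have := HN N (leqnn N); have := hj N _ _ v.
by rewrite ger0_norm ?exprn_ge0 ?th_ge0 //; lra.
Qed.

End part5.
Arguments phi : simpl never.
Section part6.
Variable R : realType.
Local Notation Q := (Qspace R).

Lemma eventually_box (Qp : nat -> nat -> nat -> Prop) m :
  (forall x y, (x <= m)%N -> (y <= m)%N -> exists n, forall k, (n <= k)%N -> Qp x y k) ->
  exists N, forall x y, (x <= m)%N -> (y <= m)%N -> Qp x y N.
Proof.
move=> H.
have : \forall k \near \oo, forall i : ('I_m.+1 * 'I_m.+1)%type, Qp i.1 i.2 k.
  apply: filter_forall => -[i j].
  have [n hn] := H i j (ltn_ord i) (ltn_ord j).
  by exists n => // k /= hk; exact: hn.
case=> N _ HN; exists N => x y xm ym.
exact: (HN N (leqnn N) (Ordinal (xm : (x < m.+1)%N), Ordinal (ym : (y < m.+1)%N))).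
Qed.

Variables g1 g2 : R.

Lemma phiSr n (q : Q) x :
  phi g1 g2 n.+1 q x = fstep g1 g2 (iter n (@Defs.shift R) q) (phi g1 g2 n q x).
Proof. by []. Qed.

Lemma coal_mono (q : Q) x y n : phi g1 g2 n q x = phi g1 g2 n q y ->
  forall k, (n <= k)%N -> phi g1 g2 k q x = phi g1 g2 k q y.
Proof.
move=> e k /subnK <-; elim: (k - n)%N => [//|j IH].
by rewrite addSn !phiSr IH.
Qed.

Lemma mneq n x y : measurable [set q : Q | phi g1 g2 n q x != phi g1 g2 n q y].
Proof.
have -> : [set q : Q | phi g1 g2 n q x != phi g1 g2 n q y] =
    \bigcup_z ([set q : Q | phi g1 g2 n q x = z] `&` ~` [set q : Q | phi g1 g2 n q y = z]).
  apply/seteqP; split => q /= H.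
    exists (phi g1 g2 n q x) => //; split => //= e.
    by move: H; rewrite e eqxx.
  have [z _ [/= -> hy]] := H; apply/eqP => e; apply: hy; by rewrite -e.
by apply: bigcupT_measurable => z; apply: measurableI;
  [exact: mphi| apply: measurableC; exact: mphi].
Qed.

Lemma natdist (x y : nat) : x != y -> 1 <= `|x%:R - y%:R| :> R.
Proof.
move=> nxy.
case: (ltngtP x y) nxy => // hxy _.
  rewrite distrC ger0_norm; last by rewrite subr_ge0 ler_nat ltnW.
  by rewrite -natrB; [rewrite ler1n subn_gt0| exact: ltnW].
rewrite ger0_norm; last by rewrite subr_ge0 ler_nat ltnW.
by rewrite -natrB; [rewrite ler1n subn_gt0| exact: ltnW].
Qed.

Lemma mem_distE (K : Q -> set nat) q x : K q x <-> distE R x (K q) = 0%E.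
Proof.
rewrite /distE; split => [Kx|d0].
  apply: le_anti; apply/andP; split.
    apply: ereal_inf_lbound; exists x => //; by rewrite subrr normr0.
  apply: le_ereal_inf_tmp => _ [y _ <-]; exact: normr_ge0.
apply: contrapT => nKx.
have : (1%E <= ereal_inf [set (`|x%:R - y%:R|)%:E | y in K q] :> \bar R)%E.
  apply: le_ereal_inf_tmp => _ [y Ky <-]; rewrite lee_fin; apply: natdist.
  by apply/eqP => e; apply: nKx; rewrite e.
by rewrite d0 lee_fin ler10.
Qed.

Variable K : Q -> set nat.
Hypothesis mK : random_set K.

Lemma mKx x : measurable [set q : Q | K q x].
Proof.
have -> : [set q : Q | K q x] = setT `&` ((fun q => distE R x (K q)) @^-1` [set 0%E]).
  by apply/seteqP; split => q /= h; [split => //; apply/mem_distE|apply/mem_distE; case: h].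
exact: mK x measurableT [set 0%E] (emeasurable_set1 0%E).
Qed.

Lemma mimg n z : measurable [set q : Q | (phi g1 g2 n q @` K q) z].
Proof.
have -> : [set q : Q | (phi g1 g2 n q @` K q) z] =
    \bigcup_x ([set q : Q | K q x] `&` [set q : Q | phi g1 g2 n q x = z]).
  apply/seteqP; split => q /=.
    by case=> x Kx e; exists x => //.
  by case=> x _ [Kx e]; exists x.
by apply: bigcupT_measurable => x; apply: measurableI; [exact: mKx| exact: mphi].
Qed.

Hypothesis Kfin : forall q, finite_set (K q).

Lemma mAn n (eps : R) :
  measurable [set q : Q | eps <= `|(ncard (phi g1 g2 n q @` K q))%:R - 1|].
Proof.
have -> : [set q : Q | eps <= `|(ncard (phi g1 g2 n q @` K q))%:R - 1|] =
    \bigcup_(F : {fset nat}) (if eps <= `|(#|` F|)%:R - 1| then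
        [set q : Q | phi g1 g2 n q @` K q = [set` F]] else set0).
  apply/seteqP; split => q /=.
    move=> H; exists (fset_set (phi g1 g2 n q @` K q)) => //.
    rewrite /ncard in H; rewrite H fset_setK //; exact: finite_image.
  by move=> [F _]; case: ifP => // hF eqF; rewrite /ncard eqF set_fsetK.
apply: countable_bigcupT_measurable; first exact: countableP.
move=> F; case: ifP => _; last exact: measurable0.
have -> : [set q : Q | phi g1 g2 n q @` K q = [set` F]] =
   \bigcap_z (if z \in F then [set q : Q | (phi g1 g2 n q @` K q) z]
              else ~` [set q : Q | (phi g1 g2 n q @` K q) z]).
  apply/seteqP; split => q /=.
    move=> e z _; case: ifPn => hz.
      have : [set` F] z := hz.
      by rewrite -e; case=> x Kx ex; exists x.
    move=> [x Kx ex]; have : [set` F] z by rewrite -e; exists x.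
    by move=> /= hF; rewrite hF in hz.
  move=> H; apply/seteqP; split => z /=.
    move=> [x Kx ex]; have := H z Logic.I; case: ifPn => // _ /= hn.
    by exfalso; apply: hn; exists x.
  by move=> hz; have := H z Logic.I; rewrite hz /= => -[x Kx ex]; exists x.
apply: bigcapT_measurable => z; case: ifP => _; first exact: mimg.
by apply: measurableC; exact: mimg.
Qed.

End part6.
Theorem proposition3p7 (R : realType) (P : probability (Qspace R) R)
  (g1 g2 : R) (K : Qspace R -> set nat) :
  is_noise_law P -> 0 < g1 -> 0 < g2 ->
  finite_random_set K ->
  (exists b : bool, {ae P, forall q : Qspace R, K q `<=` W b}) ->
  forall eps : R, 0 < eps ->
    (fun n : nat => P [set q : Qspace R |
        eps <= `| (ncard (phi g1 g2 n q @` K q))%:R - 1 | ])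
      @ \oo --> 0%E.
Proof.
move=> hP g1p g2p [mK Kne] [b Hae] eps e0.
have Kfin q : finite_set (K q) := (Kne q).2.
have [L tL] : exists L : nat, forall y, (L < y)%N -> 6 * thr g1 g2 y <= 1.
  have a0 : 0 <= 5 * g1 / g2 by rewrite divr_ge0 // ?mulr_ge0 // ltW.
  exists (Num.Def.archi_bound (5 * g1 / g2)) => y Ly.
  have hb := archi_boundP a0.
  have yb : (Num.Def.archi_bound (5 * g1 / g2))%:R <= y%:R :> R by rewrite ler_nat ltnW.
  have D0 : 0 < g1 + g2 * y%:R by rewrite ltr_wpDr // mulr_ge0 // ltW.
  have h5 : 5 * g1 < g2 * y%:R.
    have : 5 * g1 / g2 < y%:R by exact: lt_le_trans hb yb.
    by rewrite ltr_pdivrMr // [y%:R * _]mulrC.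
  rewrite /thr mulrA ler_pdivrMr // mul1r; lra.
have hz : forall x y, valid x y -> hh R P g1 g2 x y = 0.
  move=> x y v.
  exact: (@h_zero R (thr g1 g2) (hh R P g1 g2) (thr0 R g1 g2 g1p) (thr_gt0 R g1 g2 g1p g2p)
     (thr_lt R g1 g2 g1p g2p) (hh_ge0 R P g1 g2) (hh_le1 R P g1 g2) (hhxx R P g1 g2)
     (hh_rec R P hP g1 g2 g1p g2p) L tL x y v).
pose A2 n := [set q : Qspace R | exists x y, K q x /\ K q y /\
   phi g1 g2 n q x != phi g1 g2 n q y].
have mA2 n : measurable (A2 n).
  have -> : A2 n = \bigcup_x \bigcup_y ([set q : Qspace R | K q x] `&`
     [set q : Qspace R | K q y] `&` [set q : Qspace R | phi g1 g2 n q x != phi g1 g2 n q y]).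
    apply/seteqP; split => q /=.
      by move=> [x [y [Kx [Ky ne]]]]; exists x => //; exists y.
    by move=> [x _ [y _ [[Kx Ky] ne]]]; exists x, y.
  apply: bigcupT_measurable => x; apply: bigcupT_measurable => y.
  apply: measurableI; last exact: mneq.
  by apply: measurableI; exact: mKx.
have AA2 n : [set q : Qspace R | eps <= `|(ncard (phi g1 g2 n q @` K q))%:R - 1|]
    `<=` A2 n.
  move=> q /= hq; apply: contrapT => nq.
  have [x0 Kx0] := (Kne q).1.
  have img : phi g1 g2 n q @` K q = [set phi g1 g2 n q x0].
    apply/seteqP; split => z /=.
      move=> [x Kx <-]; apply: contrapT => ne; apply: nq; exists x, x0.
      by split => //; split => //; apply/eqP.
    by move=> ->; exists x0.
  move: hq; rewrite /ncard img fset_set1 cardfs1 subrr normr0 => h; lra.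
have step n : A2 n.+1 `<=` A2 n.
  move=> q [x [y [Kx [Ky ne]]]]; exists x, y; split => //; split => //.
  apply/eqP => e; move: ne; by rewrite (coal_mono e (leqnSn n)) eqxx.
have decr : {homo A2 : n m / (n <= m)%N >-> (m <= n)%O}.
  move=> n m /subnK <-; apply/subsetPset; elim: (m - n)%N => [//|k IH].
  by rewrite addSn; apply: subset_trans IH; exact: step.
have mcap : measurable (\bigcap_n A2 n) by apply: bigcapT_measurable.
have NU : P.-negligible (\bigcup_x \bigcup_y
    (if valid x y then NV g1 g2 x y else set0)).
  apply: negligible_bigcup => x; apply: negligible_bigcup => y.
  case: ifP => v; last exact: negligible_set0.
  apply/(negligibleP _ (mNV _ _ _ _ _)); have := hhE R P g1 g2 x y; rewrite (hz _ _ v) => h; exact: h.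
have cap0 : P (\bigcap_n A2 n) = 0%E.
  apply: measure_negligible => //.
  apply: (negligibleS _ (negligibleU Hae NU)) => q Hq.
  apply: contrapT => /not_orP [nb nU].
  have KW : K q `<=` W b by apply: contrapT => h; apply: nb.
  have coal x y : K q x -> K q y -> exists n, forall k, (n <= k)%N ->
      phi g1 g2 k q x = phi g1 g2 k q y.
    move=> Kx Ky.
    have pxy : odd x == odd y by rewrite (KW x Kx) (KW y Ky).
    wlog xy : x y Kx Ky pxy / (x <= y)%N.
      move=> Hw; case: (leqP x y) => xy; first exact: Hw.
      have [n hn] : exists n, forall k, (n <= k)%N -> phi g1 g2 k q y = phi g1 g2 k q x.
        by apply: Hw => //; [rewrite eq_sym|exact: ltnW].
      by exists n => k nk; rewrite hn.
    have v : valid x y by rewrite /valid xy.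
    have nNV : ~ NV g1 g2 x y q.
      by move=> h; apply: nU; exists x => //; exists y => //; rewrite v.
    have [n hn] : exists n, phi g1 g2 n q x = phi g1 g2 n q y.
      apply: contrapT => h; apply: nNV => n; apply/eqP => e; apply: h; by exists n.
    by exists n; exact: coal_mono.
  have [X KX] := finite_fsetP.1 (Kfin q).
  pose m := (\max_(x <- X) x)%N.
  have Km x : K q x -> (x <= m)%N.
    by rewrite KX => hx; rewrite /m; apply: leq_bigmax_seq.
  have [N HN] := @eventually_box (fun x y k => K q x -> K q y ->
       phi g1 g2 k q x = phi g1 g2 k q y) m
    (fun x y _ _ => match pselect (K q x /\ K q y) with
                    | left h => let: ex_intro n hn := coal x y h.1 h.2 in
                                ex_intro _ n (fun k nk _ _ => hn k nk)
                    | right h => ex_intro _ 0%N (fun k _ Kx Ky => False_ind _ (h (conj Kx Ky)))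
                    end).
  have [x [y [Kx [Ky ne]]]] := Hq N Logic.I.
  by move: ne; rewrite (HN x y (Km x Kx) (Km y Ky) Kx Ky) eqxx.
have cvgA2 : (P \o A2) n @[n --> \oo] --> 0%E.
  rewrite -cap0; apply: nonincreasing_cvg_mu => //.
  by apply: (le_lt_trans (probability_le1 _ _)) => //; exact: ltry.
apply: (@squeeze_cvge _ _ _ _ (cst 0%E) _ (P \o A2)); last 2 first.
- exact: cvg_cst.
- exact: cvgA2.
apply: nearW => n; rewrite measure_ge0 /=.
by apply: le_measure; rewrite ?inE; [apply/mem_set; exact: mAn|apply/mem_set|exact: AA2].
Qed.
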